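(* Let $m=1$ (so $Y=W_2\times W_3$). For $h\in\mathbb{R}[T]$, the real circle form $\mu_h=\varphi_h\circ\mu_0$ is equivalent to $\mu_0$ if and only if $h(0)=0$. In particular, $\mu_0$ and $\mu_1$ (the form for the constant polynomial $h=1$) are inequivalent, and the forms $\mu_h$, $h\in\mathbb{R}[T]$, fall into exactly two equivalence classes.
   Context: For $k\ge1$, $W_k=\mathbb{C}^2$ is the $\mathbb{C}^*$-module with weights $(k,-k)$: $t\cdot(x,y)=(t^kx,t^{-k}y)$. Here $n=3$ and $Y=W_2\times W_3$ with coordinates $(a,b,x,y)$, $t\cdot(a,b,x,y)=(t^2a,t^{-2}b,t^3x,t^{-3}y)$. Let $\sigma(t)=\overline{t}^{-1}$ on $\mathbb{C}^*$. A real circle form on $Y$ is an antiholomorphic involution $\mu$ of $Y$ with $\mu(t\cdot p)=\sigma(t)\cdot\mu(p)$; two such forms $\mu_1,\mu_2$ are equivalent if $\mu_2=\psi\circ\mu_1\circ\psi^{-1}$ for some regular $\mathbb{C}^*$-equivariant automorphism $\psi$ of $Y$. Let $\mu_0(a,b,x,y)=(\overline{b},\overline{a},\overline{y},\overline{x})$, $T=ab$, and for $h\in\mathbb{R}[T]$ let $M_h=\begin{pmatrix}1-Th^2 & a^nh^n\\ -b^nh^n & \sum_{j=0}^{n-1}(Th^2)^j\end{pmatrix}$ (with $h=h(ab)$), $\varphi_h(a,b,x,y)=(a,b,M_h\binom{x}{y})$, and $\mu_h=\varphi_h\circ\mu_0$. *)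

(* Defs.v *)
From HB Require Import structures.
From mathcomp Require Import all_boot all_order all_algebra.
Set Implicit Arguments. Unset Strict Implicit. Unset Printing Implicit Defensive.
Import Order.TTheory GRing.Theory Num.Theory.
Local Open Scope ring_scope.

(* Complex numbers are modelled by an arbitrary numClosedFieldType C
   (algebraically closed field with complex conjugation Num.conj); the
   statement is claimed for every such C, in particular for C itself. *)

(* Points of Y = W_2 x W_3 = C^4, coordinates (a,b,x,y). *)
Definition pt (C : numClosedFieldType) := (C * C * C * C)%type.

Section Defs.
Variable C : numClosedFieldType.

Definition ca (p : pt C) : C := p.1.1.1.
Definition cb (p : pt C) : C := p.1.1.2.
Definition cx (p : pt C) : C := p.1.2.
Definition cy (p : pt C) : C := p.2.

Definition act (t : C) (p : pt C) : pt C :=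
  (t ^+ 2 * ca p, t ^- 2 * cb p, t ^+ 3 * cx p, t ^- 3 * cy p).

Definition sigma (t : C) : C := (Num.conj t)^-1.

Inductive polyfun : (pt C -> C) -> Prop :=
| PF_const (c : C) : polyfun (fun _ => c)
| PF_a : polyfun ca
| PF_b : polyfun cb
| PF_x : polyfun cx
| PF_y : polyfun cy
| PF_add f g : polyfun f -> polyfun g -> polyfun (fun p => f p + g p)
| PF_mul f g : polyfun f -> polyfun g -> polyfun (fun p => f p * g p).

Definition regular_map (f : pt C -> pt C) : Prop :=
  [/\ polyfun (fun p => ca (f p)), polyfun (fun p => cb (f p)),
      polyfun (fun p => cx (f p)) & polyfun (fun p => cy (f p))].

Definition equivariant (f : pt C -> pt C) : Prop :=
  forall t, t != 0 -> forall p, f (act t p) = act t (f p).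

(* Real circle form: antiholomorphic (= complex conjugation composed with a
   regular map) involution, sigma-equivariant. (Recorded for context.) *)
Definition real_circle_form (mu : pt C -> pt C) : Prop :=
  [/\ (exists g, regular_map g /\
        forall p, mu p = (Num.conj (ca (g p)), Num.conj (cb (g p)),
                          Num.conj (cx (g p)), Num.conj (cy (g p)))),
      (forall p, mu (mu p) = p) &
      (forall t, t != 0 -> forall p, mu (act t p) = act (sigma t) (mu p))].

Definition equiv_forms (mu1 mu2 : pt C -> pt C) : Prop :=
  exists psi psi' : pt C -> pt C,
    [/\ regular_map psi /\ regular_map psi', cancel psi psi', cancel psi' psi,
        equivariant psi & (forall p, mu2 p = psi (mu1 (psi' p)))].

Definition mu0 (p : pt C) : pt C :=
  (Num.conj (cb p), Num.conj (ca p), Num.conj (cy p), Num.conj (cx p)).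

Definition nW : nat := 3.

Definition phi (h : {poly C}) (p : pt C) : pt C :=
  let a := ca p in let b := cb p in let T := a * b in let s := h.[T] in
  (a, b,
   (1 - T * s ^+ 2) * cx p + a ^+ nW * s ^+ nW * cy p,
   - (b ^+ nW * s ^+ nW) * cx p + (\sum_(j < nW) (T * s ^+ 2) ^+ j) * cy p).

Definition mu (h : {poly C}) (p : pt C) : pt C := phi h (mu0 p).

Definition real_poly (h : {poly C}) : Prop := h \is a polyOver Num.real.

End Defs.

(* Main.v *)
Require Import Defs.
From HB Require Import structures.
From mathcomp Require Import all_boot all_order all_algebra.
From mathcomp Require Import ring zify.
From Stdlib Require Import FunctionalExtensionality.
Set Implicit Arguments. Unset Strict Implicit. Unset Printing Implicit Defensive.
Import Order.TTheory GRing.Theory Num.Theory.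
Local Open Scope ring_scope.

Section PolyFacts.
Variable C : numClosedFieldType.

Lemma poly_eq_nat (p q : {poly C}) :
  (forall n : nat, p.[n.+1%:R] = q.[n.+1%:R]) -> p = q.
Proof.
move=> H; apply/eqP; rewrite -subr_eq0; apply/eqP.
apply: (@roots_geq_poly_eq0 _ _ [seq i.+1%:R | i <- iota 0 (size (p - q))]).
- apply/allP => x /mapP [i _ ->]; by rewrite /root hornerD hornerN H subrr.
- rewrite map_inj_uniq ?iota_uniq // => i j /eqP; rewrite eqr_nat => /eqP; by case.
- by rewrite size_map size_iota.
Qed.

Lemma poly_eq_nz (p q : {poly C}) :
  (forall x : C, x != 0 -> p.[x] = q.[x]) -> p = q.
Proof. by move=> H; apply: poly_eq_nat => n; apply: H; rewrite pnatr_eq0. Qed.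

Lemma poly_eq_all (p q : {poly C}) : (forall x : C, p.[x] = q.[x]) -> p = q.
Proof. by move=> H; apply: poly_eq_nz => x _; apply: H. Qed.

Lemma poly_unit_const (p q : {poly C}) : p * q = 1 -> size p = 1%N.
Proof.
move=> H.
have: size (p * q) == 1%N by rewrite H size_polyC oner_neq0.
by rewrite size_mul_eq1 => /andP [/eqP -> _].
Qed.

End PolyFacts.

Inductive pexpr (C : Type) :=
| EC of C | EA | EB | EX | EY
| EAdd of pexpr C & pexpr C | EMul of pexpr C & pexpr C.
Arguments EA {C}. Arguments EB {C}. Arguments EX {C}. Arguments EY {C}.

Section Syntax.
Variable C : numClosedFieldType.

Fixpoint peval (R : comNzRingType) (emb : C -> R) (ra rb rx ry : R)
  (e : pexpr C) : R :=
  match e with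
  | EC c => emb c | EA => ra | EB => rb | EX => rx | EY => ry
  | EAdd e1 e2 => peval emb ra rb rx ry e1 + peval emb ra rb rx ry e2
  | EMul e1 e2 => peval emb ra rb rx ry e1 * peval emb ra rb rx ry e2
  end.

Fixpoint pder (R : comNzRingType) (emb : C -> R) (ra rb rx ry da db dx dy : R)
  (e : pexpr C) : R :=
  match e with
  | EC c => 0 | EA => da | EB => db | EX => dx | EY => dy
  | EAdd e1 e2 => pder emb ra rb rx ry da db dx dy e1 + pder emb ra rb rx ry da db dx dy e2
  | EMul e1 e2 => peval emb ra rb rx ry e1 * pder emb ra rb rx ry da db dx dy e2
                  + pder emb ra rb rx ry da db dx dy e1 * peval emb ra rb rx ry e2
  end.

Lemma peval_morph (R S : comNzRingType) (f : {rmorphism R -> S}) emb ra rb rx ry e :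
  f (peval emb ra rb rx ry e) = peval (f \o emb) (f ra) (f rb) (f rx) (f ry) e.
Proof. by elim: e => //= e1 IH1 e2 IH2; rewrite ?rmorphD ?rmorphM /= IH1 IH2. Qed.

Lemma pder_morph (R S : comNzRingType) (f : {rmorphism R -> S}) emb ra rb rx ry da db dx dy e :
  f (pder emb ra rb rx ry da db dx dy e) =
  pder (f \o emb) (f ra) (f rb) (f rx) (f ry) (f da) (f db) (f dx) (f dy) e.
Proof.
elim: e => //= [c|e1 IH1 e2 IH2|e1 IH1 e2 IH2]; first by rewrite rmorph0.
  by rewrite rmorphD IH1 IH2.
by rewrite rmorphD !rmorphM /= IH1 IH2 !peval_morph.
Qed.

Lemma peval_ext (R : comNzRingType) (emb1 emb2 : C -> R) ra rb rx ry e :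
  emb1 =1 emb2 -> peval emb1 ra rb rx ry e = peval emb2 ra rb rx ry e.
Proof. by move=> H; elim: e => //= e1 -> e2 ->. Qed.

Lemma pder_ext (R : comNzRingType) (emb1 emb2 : C -> R) ra rb rx ry da db dx dy e :
  emb1 =1 emb2 -> pder emb1 ra rb rx ry da db dx dy e = pder emb2 ra rb rx ry da db dx dy e.
Proof.
move=> H; elim: e => //= [e1 IH1 e2 IH2|e1 IH1 e2 IH2]; rewrite IH1 IH2 //.
by rewrite (peval_ext _ _ _ _ e1 H) (peval_ext _ _ _ _ e2 H).
Qed.

Lemma pder_add (R : comNzRingType) emb (ra rb rx ry da db dx dy da' db' dx' dy' : R) e :
  pder emb ra rb rx ry (da + da') (db + db') (dx + dx') (dy + dy') e =
  pder emb ra rb rx ry da db dx dy e + pder emb ra rb rx ry da' db' dx' dy' e.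
Proof.
elim: e => //= [c|e1 IH1 e2 IH2|e1 IH1 e2 IH2]; first by rewrite addr0.
  rewrite IH1 IH2; ring.
rewrite IH1 IH2; ring.
Qed.

Lemma pder_scale (R : comNzRingType) emb (ra rb rx ry da db dx dy k : R) e :
  pder emb ra rb rx ry (k * da) (k * db) (k * dx) (k * dy) e =
  k * pder emb ra rb rx ry da db dx dy e.
Proof.
elim: e => //= [c|e1 IH1 e2 IH2|e1 IH1 e2 IH2]; first by rewrite mulr0.
  rewrite IH1 IH2; ring.
rewrite IH1 IH2; ring.
Qed.

(* chain rule : coefficients 0 and 1 of a composite polynomial curve *)
Lemma peval_curve (pa pb px py : {poly C}) e :
  (peval (fun c => c%:P) pa pb px py e)`_0 = (peval id pa`_0 pb`_0 px`_0 py`_0 e) /\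
  (peval (fun c => c%:P) pa pb px py e)`_1 =
    pder id pa`_0 pb`_0 px`_0 py`_0 pa`_1 pb`_1 px`_1 py`_1 e.
Proof.
elim: e => /= [c| | | | |e1 [H0 H1] e2 [K0 K1]|e1 [H0 H1] e2 [K0 K1]] //.
- by rewrite coefC coefC /=.
- by rewrite !coefD H0 H1 K0 K1.
- rewrite coef0M H0 K0; split => //.
  rewrite coefM big_ord_recr big_ord_recr big_ord0 /= add0r H0 H1 K0 K1.
  by rewrite addrC.
Qed.

Lemma peval_horner (pa pb px py : {poly C}) e (z : C) :
  (peval (fun c => c%:P) pa pb px py e).[z] = peval id pa.[z] pb.[z] px.[z] py.[z] e.
Proof.
have := peval_morph (horner_eval z) (fun c => c%:P) pa pb px py e.
rewrite /= !horner_evalE => ->; apply: peval_ext => c /=; by rewrite horner_evalE hornerC.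
Qed.

End Syntax.

Section Lines.
Variable C : numClosedFieldType.

Definition ev (e : pexpr C) (a b x y : C) := peval id a b x y e.
Definition dv (e : pexpr C) (a b x y da db dx dy : C) := pder id a b x y da db dx dy e.

Definition lpoly (a d : C) : {poly C} := a%:P + d%:P * 'X.

Lemma lpoly0 a d : (lpoly a d)`_0 = a.
Proof. by rewrite /lpoly coefD coefC coefCM coefX /= mulr0 addr0. Qed.
Lemma lpoly1 a d : (lpoly a d)`_1 = d.
Proof. by rewrite /lpoly coefD coefC coefCM coefX /= mulr1 add0r. Qed.
Lemma lpolyE a d z : (lpoly a d).[z] = a + d * z.
Proof. by rewrite /lpoly hornerD hornerC hornerCM hornerX. Qed.

Definition lin e (a b x y da db dx dy : C) : {poly C} :=
  peval (fun c => c%:P) (lpoly a da) (lpoly b db) (lpoly x dx) (lpoly y dy) e.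

Lemma linE e a b x y da db dx dy z :
  (lin e a b x y da db dx dy).[z] = ev e (a + da * z) (b + db * z) (x + dx * z) (y + dy * z).
Proof. by rewrite /lin peval_horner !lpolyE. Qed.

Lemma lin1 e a b x y da db dx dy :
  (lin e a b x y da db dx dy)`_1 = dv e a b x y da db dx dy.
Proof. by have [_ ->] := peval_curve (lpoly a da) (lpoly b db) (lpoly x dx) (lpoly y dy) e; rewrite !lpoly0 !lpoly1. Qed.

Lemma coef1_eq (P Q : {poly C}) : (forall n : nat, P.[n.+1%:R] = Q.[n.+1%:R]) -> P`_1 = Q`_1.
Proof. by move=> H; rewrite (poly_eq_nat H). Qed.

Lemma polyfun_expr (f : pt C -> C) : polyfun f ->
  exists e, forall p, f p = ev e (ca p) (cb p) (cx p) (cy p).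
Proof.
elim=> [c| | | | |f1 g1 _ [e1 H1] _ [e2 H2]|f1 g1 _ [e1 H1] _ [e2 H2]].
- by exists (EC c).
- by exists EA. - by exists EB. - by exists EX. - by exists EY.
- by exists (EAdd e1 e2) => p; rewrite H1 H2.
- by exists (EMul e1 e2) => p; rewrite H1 H2.
Qed.

Lemma polyfun_comp (f : pt C -> C) (g : pt C -> pt C) :
  polyfun f -> regular_map g -> polyfun (fun p => f (g p)).
Proof.
move=> pf [ga gb gx gy]; elim: pf => //; try by move=> *; constructor.
Qed.

Lemma polyfun_poly (P : {poly C}) : polyfun (fun p => P.[ca p * cb p]).
Proof.
elim/poly_ind: P => [|P c IH].
  have -> : (fun p : pt C => (0 : {poly C}).[ca p * cb p]) = (fun _ => 0).
    by apply: functional_extensionality => p; rewrite horner0.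
  by constructor.
have -> : (fun p => (P * 'X + c%:P).[ca p * cb p]) =
   (fun p => (fun p => P.[ca p * cb p]) p * (fun p => ca p * cb p) p + (fun _ => c) p).
  by apply: functional_extensionality => p; rewrite hornerD hornerMX hornerC.
by apply: PF_add; [apply: PF_mul => //; apply: PF_mul; constructor|constructor].
Qed.

End Lines.

Section More.
Variable C : numClosedFieldType.

Lemma lin0 (e : pexpr C) a b x y da db dx dy :
  (lin e a b x y da db dx dy)`_0 = ev e a b x y.
Proof. by have [-> _] := peval_curve (lpoly a da) (lpoly b db) (lpoly x dx) (lpoly y dy) e; rewrite !lpoly0. Qed.

Lemma pderP (e : pexpr C) (pa pb px py da db dx dy : {poly C}) z :
  (pder (fun c => c%:P) pa pb px py da db dx dy e).[z] =
  dv e pa.[z] pb.[z] px.[z] py.[z] da.[z] db.[z] dx.[z] dy.[z].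
Proof.
have := pder_morph (horner_eval z) (fun c => c%:P) pa pb px py da db dx dy e.
rewrite /= !horner_evalE => ->; apply: pder_ext => c /=; by rewrite horner_evalE hornerC.
Qed.

Lemma pt_eta (p : pt C) : p = (ca p, cb p, cx p, cy p).
Proof. by case: p => [[[a b] x] y]. Qed.

Lemma conj_horner (P : {poly C}) z : (P.[z])^* = (map_poly Num.conj P).[z^*].
Proof. by rewrite horner_map. Qed.

Lemma conj_nat (n : nat) : (n%:R : C)^* = n%:R.
Proof. exact: rmorph_nat. Qed.

End More.

Section Equiv.
Variable C : numClosedFieldType.
Variable f : pt C -> pt C.
Variables eA eB eX eY : pexpr C.
Hypothesis hA : forall p, ca (f p) = ev eA (ca p) (cb p) (cx p) (cy p).
Hypothesis hB : forall p, cb (f p) = ev eB (ca p) (cb p) (cx p) (cy p).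
Hypothesis hX : forall p, cx (f p) = ev eX (ca p) (cb p) (cx p) (cy p).
Hypothesis hY : forall p, cy (f p) = ev eY (ca p) (cb p) (cx p) (cy p).
Hypothesis heq : equivariant f.

Lemma neg1_neq0 : (-1 : C) != 0. Proof. by rewrite oppr_eq0 oner_neq0. Qed.

Lemma selfneg (z : C) : z = - z -> z = 0.
Proof.
move=> H; apply/eqP; have : z *+ 2 == 0 by rewrite mulr2n {1}H addNr.
by rewrite mulrn_eq0.
Qed.

Lemma act_m1 (a b x y : C) : act (-1) (a, b, x, y) = (a, b, - x, - y).
Proof.
rewrite /act /ca /cb /cx /cy /= sqrrN expr1n invr1 !mul1r.
by rewrite exprS sqrrN expr1n mulr1 invrN invr1 !mulN1r.
Qed.

Lemma base_x a b : cx (f (a, b, 0, 0)) = 0.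
Proof.
have := heq neg1_neq0 (a, b, 0, 0); rewrite act_m1 oppr0 => E.
apply: selfneg; rewrite {1}E /act /cx /= exprS sqrrN expr1n mulr1 mulN1r //.
Qed.

Lemma base_y a b : cy (f (a, b, 0, 0)) = 0.
Proof.
have := heq neg1_neq0 (a, b, 0, 0); rewrite act_m1 oppr0 => E.
apply: selfneg; rewrite {1}E /act /cy /= exprS sqrrN expr1n mulr1 invrN invr1 mulN1r //.
Qed.

End Equiv.

Section Equiv2.
Variable C : numClosedFieldType.
Variable f : pt C -> pt C.
Variables eA eB eX eY : pexpr C.
Hypothesis hA : forall p, ca (f p) = ev eA (ca p) (cb p) (cx p) (cy p).
Hypothesis hB : forall p, cb (f p) = ev eB (ca p) (cb p) (cx p) (cy p).
Hypothesis hX : forall p, cx (f p) = ev eX (ca p) (cb p) (cx p) (cy p).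
Hypothesis hY : forall p, cy (f p) = ev eY (ca p) (cb p) (cx p) (cy p).
Hypothesis heq : equivariant f.

Definition Ua := lin eA 1 0 0 0 0 1 0 0.
Definition Vb := lin eB 0 1 0 0 1 0 0 0.

Lemma UaE T : Ua.[T] = ca (f (1, T, 0, 0)).
Proof. by rewrite /Ua linE hA /= !mul0r !mul1r !addr0 !add0r. Qed.
Lemma VbE T : Vb.[T] = cb (f (T, 1, 0, 0)).
Proof. by rewrite /Vb linE hB /= !mul0r !mul1r !addr0 !add0r. Qed.

Lemma base_a_nz a b : a != 0 -> ca (f (a, b, 0, 0)) = a * Ua.[a * b].
Proof.
move=> a0; set t := sqrtC a.
have t2 : t ^+ 2 = a by rewrite sqrtCK.
have t0 : t != 0 by apply: contraNneq a0 => t0; rewrite -t2 t0 expr0n.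
have E : act t (1, a * b, 0, 0) = (a, b, 0, 0).
  by rewrite /act /ca /cb /cx /cy /= t2 mulr1 !mulr0 mulKf.
have := heq t0 (1, a * b, 0, 0); rewrite E => ->.
by rewrite /act /ca /= t2 UaE.
Qed.

Lemma base_b_nz a b : b != 0 -> cb (f (a, b, 0, 0)) = b * Vb.[a * b].
Proof.
move=> b0; set t := (sqrtC b)^-1.
have t2 : t ^- 2 = b by rewrite /t exprVn invrK sqrtCK.
have t0 : t != 0.
  rewrite invr_eq0; apply: contraNneq b0 => t0; by rewrite -(sqrtCK b) t0 expr0n.
have t2' : t ^+ 2 = b^-1 by rewrite -t2 invrK.
have E : act t (a * b, 1, 0, 0) = (a, b, 0, 0).
  by rewrite /act /ca /cb /cx /cy /= t2 t2' mulr1 !mulr0 (mulrC a b) mulKf.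
have := heq t0 (a * b, 1, 0, 0); rewrite E => ->.
by rewrite /act /cb /= t2 VbE.
Qed.

Lemma base_a a b : ca (f (a, b, 0, 0)) = a * Ua.[a * b].
Proof.
have [->|a0] := eqVneq a 0; last exact: base_a_nz.
set P := lin eA 0 b 0 0 1 0 0 0.
have PE z : P.[z] = ca (f (z, b, 0, 0)).
  by rewrite /P linE hA /= !mul0r !mul1r !addr0 !add0r.
have : P = 'X * (Ua \Po (b%:P * 'X)).
  apply: poly_eq_nz => z z0; rewrite PE base_a_nz // hornerM hornerX horner_comp.
  by rewrite hornerCM hornerX (mulrC b z).
move/(congr1 (fun q => q.[0])); rewrite PE hornerM hornerX !mul0r => ->.
by [].
Qed.

Lemma base_b a b : cb (f (a, b, 0, 0)) = b * Vb.[a * b].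
Proof.
have [->|b0] := eqVneq b 0; last exact: base_b_nz.
set P := lin eB a 0 0 0 0 1 0 0.
have PE z : P.[z] = cb (f (a, z, 0, 0)).
  by rewrite /P linE hB /= !mul0r !mul1r !addr0 !add0r.
have : P = 'X * (Vb \Po (a%:P * 'X)).
  apply: poly_eq_nz => z z0; rewrite PE base_b_nz // hornerM hornerX horner_comp.
  by rewrite hornerCM hornerX.
move/(congr1 (fun q => q.[0])); rewrite PE hornerM hornerX !mul0r => ->.
by [].
Qed.


Lemma linfA a b x y da db dx dy z :
  (lin eA a b x y da db dx dy).[z] = ca (f (a + da * z, b + db * z, x + dx * z, y + dy * z)).
Proof. by rewrite linE hA. Qed.
Lemma linfB a b x y da db dx dy z :
  (lin eB a b x y da db dx dy).[z] = cb (f (a + da * z, b + db * z, x + dx * z, y + dy * z)).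
Proof. by rewrite linE hB. Qed.
Lemma linfX a b x y da db dx dy z :
  (lin eX a b x y da db dx dy).[z] = cx (f (a + da * z, b + db * z, x + dx * z, y + dy * z)).
Proof. by rewrite linE hX. Qed.
Lemma linfY a b x y da db dx dy z :
  (lin eY a b x y da db dx dy).[z] = cy (f (a + da * z, b + db * z, x + dx * z, y + dy * z)).
Proof. by rewrite linE hY. Qed.

Lemma dv_neg (e : pexpr C) (a b x y : C) : dv e a b 0 0 0 0 (- x) (- y) = - dv e a b 0 0 0 0 x y.
Proof.
have := pder_scale id a b 0 0 0 0 x y (-1) e.
by rewrite /dv !mulr0 !mulN1r.
Qed.

Lemma even_a a b x y : dv eA a b 0 0 0 0 x y = 0.
Proof.
apply: selfneg; rewrite -dv_neg -!lin1; apply: coef1_eq => n.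
rewrite !linfA !mul0r !addr0 !add0r !mulNr -act_m1.
by rewrite (heq (@neg1_neq0 C)) /act /ca /= sqrrN expr1n mul1r.
Qed.

Lemma even_b a b x y : dv eB a b 0 0 0 0 x y = 0.
Proof.
apply: selfneg; rewrite -dv_neg -!lin1; apply: coef1_eq => n.
rewrite !linfB !mul0r !addr0 !add0r !mulNr -act_m1.
by rewrite (heq (@neg1_neq0 C)) /act /cb /= sqrrN expr1n invr1 mul1r.
Qed.

Lemma act_line (t a b x y z : C) :
  act t (a, b, x * z, y * z) = (t ^+ 2 * a, t ^- 2 * b, t ^+ 3 * x * z, t ^- 3 * y * z).
Proof. by rewrite /act /ca /cb /cx /cy /= !mulrA. Qed.

Lemma lin_equiv_x (t a b x y : C) : t != 0 ->
  dv eX (t ^+ 2 * a) (t ^- 2 * b) 0 0 0 0 (t ^+ 3 * x) (t ^- 3 * y) =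
  t ^+ 3 * dv eX a b 0 0 0 0 x y.
Proof.
move=> t0; rewrite -!lin1 -coefCM; apply: coef1_eq => n.
rewrite hornerCM !linfX !mul0r !addr0 !add0r -act_line.
by rewrite (heq t0) /act /cx /=.
Qed.

Lemma lin_equiv_y (t a b x y : C) : t != 0 ->
  dv eY (t ^+ 2 * a) (t ^- 2 * b) 0 0 0 0 (t ^+ 3 * x) (t ^- 3 * y) =
  t ^- 3 * dv eY a b 0 0 0 0 x y.
Proof.
move=> t0; rewrite -!lin1 -coefCM; apply: coef1_eq => n.
rewrite hornerCM !linfY !mul0r !addr0 !add0r -act_line.
by rewrite (heq t0) /act /cy /=.
Qed.

Lemma dv_lin (e : pexpr C) (a b x y : C) : dv e a b 0 0 0 0 x y =
  x * dv e a b 0 0 0 0 1 0 + y * dv e a b 0 0 0 0 0 1.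
Proof.
have := pder_add id a b 0 0 0 0 x 0 0 0 0 y e.
rewrite !addr0 !add0r /dv => ->.
have := pder_scale id a b 0 0 0 0 1 0 x e; rewrite !mulr0 mulr1 => ->.
by have := pder_scale id a b 0 0 0 0 0 1 y e; rewrite !mulr0 mulr1 => ->.
Qed.

End Equiv2.

Section Core.
Variable C : numClosedFieldType.
Variables psi psi' : pt C -> pt C.
Variables eA eB eX eY fA fB fX fY : pexpr C.
Hypothesis hA : forall p, ca (psi p) = ev eA (ca p) (cb p) (cx p) (cy p).
Hypothesis hB : forall p, cb (psi p) = ev eB (ca p) (cb p) (cx p) (cy p).
Hypothesis hX : forall p, cx (psi p) = ev eX (ca p) (cb p) (cx p) (cy p).
Hypothesis hY : forall p, cy (psi p) = ev eY (ca p) (cb p) (cx p) (cy p).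
Hypothesis gA : forall p, ca (psi' p) = ev fA (ca p) (cb p) (cx p) (cy p).
Hypothesis gB : forall p, cb (psi' p) = ev fB (ca p) (cb p) (cx p) (cy p).
Hypothesis gX : forall p, cx (psi' p) = ev fX (ca p) (cb p) (cx p) (cy p).
Hypothesis gY : forall p, cy (psi' p) = ev fY (ca p) (cb p) (cx p) (cy p).
Hypothesis can1 : cancel psi psi'.
Hypothesis can2 : cancel psi' psi.
Hypothesis heq : equivariant psi.

Lemma heq' : equivariant psi'.
Proof. by move=> t t0 p; rewrite -{1}(can2 p) -heq // can1. Qed.

Lemma psi_base a b : psi (a, b, 0, 0) =
  (a * (Ua eA).[a * b], b * (Vb eB).[a * b], 0, 0).
Proof.
rewrite [LHS]pt_eta (base_a hA heq) (base_b hB heq) (base_x heq) (base_y heq) //.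
Qed.

Lemma psi'_base a b : psi' (a, b, 0, 0) =
  (a * (Ua fA).[a * b], b * (Vb fB).[a * b], 0, 0).
Proof.
rewrite [LHS]pt_eta (base_a gA heq') (base_b gB heq') (base_x heq') (base_y heq') //.
Qed.

Definition lam := (Ua eA)`_0.
Definition lam' := (Vb eB)`_0.

Lemma Ua_const : Ua eA = lam%:P /\ lam != 0.
Proof.
set U := Ua eA; set V := Vb eB; set U' := Ua fA.
have H : U * (U' \Po (U * ('X * V))) = 1.
  apply: poly_eq_all => T.
  have := can1 (1, T, 0, 0); rewrite psi_base psi'_base => /(congr1 (@ca C)) /=.
  rewrite !mul1r hornerC hornerM horner_comp !hornerM hornerX /= => E.
  by rewrite -[RHS]E mulrA.
have s1 := poly_unit_const H.
have E : U = lam%:P by rewrite [LHS]size1_polyC ?s1.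
split=> //; apply/eqP => l0; move: H; rewrite E l0 mul0r => /eqP.
by rewrite eq_sym oner_eq0.
Qed.

Lemma Vb_const : Vb eB = lam'%:P /\ lam' != 0.
Proof.
set U := Ua eA; set V := Vb eB; set V' := Vb fB.
have H : V * (V' \Po (U * ('X * V))) = 1.
  apply: poly_eq_nz => T T0.
  have := can1 (1, T, 0, 0); rewrite psi_base psi'_base => /(congr1 (@cb C)).
  rewrite /cb /= !mul1r => E.
  rewrite hornerM horner_comp !hornerM hornerX hornerC.
  apply: (mulfI T0); rewrite mulr1 -[RHS]E -!mulrA; reflexivity.
have s1 := poly_unit_const H.
have E : V = lam'%:P by rewrite [LHS]size1_polyC ?s1.
split=> //; apply/eqP => l0; move: H; rewrite E l0 mul0r => /eqP.
by rewrite eq_sym oner_eq0.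
Qed.

Lemma psi_base' a b : psi (a, b, 0, 0) = (lam * a, lam' * b, 0, 0).
Proof.
by rewrite psi_base (proj1 Ua_const) (proj1 Vb_const) !hornerC (mulrC a) (mulrC b).
Qed.


Lemma evA a b x y : ev eA a b x y = ca (psi (a, b, x, y)). Proof. by rewrite hA. Qed.
Lemma evB a b x y : ev eB a b x y = cb (psi (a, b, x, y)). Proof. by rewrite hB. Qed.
Lemma evX a b x y : ev eX a b x y = cx (psi (a, b, x, y)). Proof. by rewrite hX. Qed.
Lemma evY a b x y : ev eY a b x y = cy (psi (a, b, x, y)). Proof. by rewrite hY. Qed.

Lemma chain_x T x y :
  dv fX (lam * 1) (lam' * T) 0 0 0 0 (dv eX 1 T 0 0 0 0 x y) (dv eY 1 T 0 0 0 0 x y) = x.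
Proof.
set P := peval (fun c => c%:P) (lin eA 1 T 0 0 0 0 x y) (lin eB 1 T 0 0 0 0 x y)
   (lin eX 1 T 0 0 0 0 x y) (lin eY 1 T 0 0 0 0 x y) fX.
have E : P`_1 = (lpoly 0 x)`_1.
  apply: coef1_eq => n; rewrite peval_horner lpolyE.
  rewrite (linfA hA) (linfB hB) (linfX hX) (linfY hY) -/(ev fX _ _ _ _) -gX can1 /cx /=.
  by [].
rewrite lpoly1 in E; rewrite -[X in _ = X]E.
have [_ ->] := peval_curve (lin eA 1 T 0 0 0 0 x y) (lin eB 1 T 0 0 0 0 x y)
   (lin eX 1 T 0 0 0 0 x y) (lin eY 1 T 0 0 0 0 x y) fX.
rewrite !lin0 !lin1 (even_a hA heq) (even_b hB heq) evA evB evX evY psi_base' /=.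
by [].
Qed.

Lemma chain_y T x y :
  dv fY (lam * 1) (lam' * T) 0 0 0 0 (dv eX 1 T 0 0 0 0 x y) (dv eY 1 T 0 0 0 0 x y) = y.
Proof.
set P := peval (fun c => c%:P) (lin eA 1 T 0 0 0 0 x y) (lin eB 1 T 0 0 0 0 x y)
   (lin eX 1 T 0 0 0 0 x y) (lin eY 1 T 0 0 0 0 x y) fY.
have E : P`_1 = (lpoly 0 y)`_1.
  apply: coef1_eq => n; rewrite peval_horner lpolyE.
  rewrite (linfA hA) (linfB hB) (linfX hX) (linfY hY) -/(ev fY _ _ _ _) -gY can1 /cy /=.
  by [].
rewrite lpoly1 in E; rewrite -[X in _ = X]E.
have [_ ->] := peval_curve (lin eA 1 T 0 0 0 0 x y) (lin eB 1 T 0 0 0 0 x y)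
   (lin eX 1 T 0 0 0 0 x y) (lin eY 1 T 0 0 0 0 x y) fY.
rewrite !lin0 !lin1 (even_a hA heq) (even_b hB heq) evA evB evX evY psi_base' /=.
by [].
Qed.

Definition entP (e : pexpr C) (a b : {poly C}) (u v : C) : {poly C} :=
  pder (fun c => c%:P) a b 0 0 0 0 u%:P v%:P e.

Lemma entPE e a b u v T : (entP e a b u v).[T] = dv e a.[T] b.[T] 0 0 0 0 u v.
Proof. by rewrite /entP pderP !horner0 !hornerC. Qed.

Definition alP := entP eX 1 'X 1 0.
Definition beP := entP eX 1 'X 0 1.
Definition gaP := entP eY 1 'X 1 0.
Definition deP := entP eY 1 'X 0 1.
Definition detP := alP * deP - beP * gaP.

Lemma detP_const : detP = (detP`_0)%:P /\ detP`_0 != 0.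
Proof.
set m := fun e u v => entP e (lam * 1)%:P (lam'%:P * 'X) u v.
set d' := m fX 1 0 * m fY 0 1 - m fX 0 1 * m fY 1 0.
have H : detP * d' = 1.
  apply: poly_eq_all => T.
  rewrite /d' /m /detP /alP /beP /gaP /deP !hornerE !entPE !hornerE /=.
  have e1 := chain_x T 1 0; have e2 := chain_x T 0 1.
  have e3 := chain_y T 1 0; have e4 := chain_y T 0 1.
  rewrite (dv_lin fX (lam * 1) (lam' * T)) in e1.
  rewrite (dv_lin fX (lam * 1) (lam' * T)) in e2.
  rewrite (dv_lin fY (lam * 1) (lam' * T)) in e3.
  rewrite (dv_lin fY (lam * 1) (lam' * T)) in e4.
  rewrite !mulr1 in e1 e2 e3 e4.
  move: e1 e2 e3 e4.
  set a1 := dv eX 1 T 0 0 0 0 1 0; set b1 := dv eX 1 T 0 0 0 0 0 1.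
  set g1 := dv eY 1 T 0 0 0 0 1 0; set d1 := dv eY 1 T 0 0 0 0 0 1.
  set m11 := dv fX lam (lam' * T) 0 0 0 0 1 0; set m12 := dv fX lam (lam' * T) 0 0 0 0 0 1.
  set m21 := dv fY lam (lam' * T) 0 0 0 0 1 0; set m22 := dv fY lam (lam' * T) 0 0 0 0 0 1.
  move=> e1 e2 e3 e4.
  have -> : (a1 * d1 - b1 * g1) * (m11 * m22 - m12 * m21) =
    (a1 * m11 + g1 * m12) * (b1 * m21 + d1 * m22) - (b1 * m11 + d1 * m12) * (a1 * m21 + g1 * m22).
    by ring.
  by rewrite e1 e2 e3 e4 mul1r mul0r subr0.
have s1 := poly_unit_const H.
have E : detP = (detP`_0)%:P by rewrite [LHS]size1_polyC ?s1.
split=> //; apply/eqP => l0; move: H; rewrite E l0 mul0r => /eqP.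
by rewrite eq_sym oner_eq0.
Qed.

Definition alP2 := entP eX 'X 1 1 0.
Definition gaP2 := entP eY 'X 1 1 0.

Lemma sqrt_facts (T : C) : T != 0 ->
  let t := sqrtC T in [/\ t != 0, t ^+ 2 * 1 = T, t ^- 2 * T = 1 & t ^- 3 * 0 = 0].
Proof.
move=> T0 t; have t2 : t ^+ 2 = T by rewrite sqrtCK.
have t0 : t != 0 by apply: contraNneq T0 => t0; rewrite -t2 t0 expr0n.
by split; rewrite ?mulr0 ?mulr1 // t2 mulVf.
Qed.

Lemma alP_eq : alP = alP2.
Proof.
apply: poly_eq_nz => T T0; rewrite /alP /alP2 !entPE !hornerE.
have [t0 e1 e2 e3] := sqrt_facts T0; set t := sqrtC T in t0 e1 e2 e3 *.
have := lin_equiv_x hX heq 1 T 1 0 t0; rewrite e1 e2 e3 mulr1.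
rewrite (dv_lin eX T 1 (t ^+ 3) 0) mul0r addr0 => /(mulfI (expf_neq0 3 t0)).
by move=> ->.
Qed.

Lemma gaP_eq : gaP = 'X ^+ 3 * gaP2.
Proof.
apply: poly_eq_nz => T T0; rewrite /gaP /gaP2 hornerM hornerXn !entPE !hornerE.
have [t0 e1 e2 e3] := sqrt_facts T0; set t := sqrtC T in t0 e1 e2 e3 *.
have := lin_equiv_y hY heq 1 T 1 0 t0; rewrite e1 e2 e3 mulr1.
rewrite (dv_lin eY T 1 (t ^+ 3) 0) mul0r addr0 => E.
have t2 : t ^+ 2 = T by rewrite sqrtCK.
have : t ^+ 3 * (t ^+ 3 * dv eY T 1 0 0 0 0 1 0) = dv eY 1 T 0 0 0 0 1 0.
  by rewrite E mulrA mulfV ?mul1r // expf_neq0.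
move=> <-; rewrite mulrA -exprD -t2 -exprM //.
Qed.

Variable c : C.
Hypothesis creal : c^* = c.
Hypothesis cnz : c != 0.
Hypothesis Hmu : forall p, mu (c%:P) p = psi (mu0 (psi' p)).

Lemma Hm p : mu (c%:P) (psi p) = psi (mu0 p).
Proof. by rewrite Hmu can1. Qed.

Lemma lam_conj : lam'^* = lam.
Proof.
have := Hm (1, 1, 0, 0); rewrite /mu /mu0 /ca /cb /cx /cy /= rmorph1 rmorph0.
rewrite -[((1, 1, 0, 0) : pt C)]/((1 : C), (1 : C), (0 : C), (0 : C)).
rewrite !psi_base' /phi /= => /(congr1 (@ca C)); rewrite /ca /= !mulr1 => ->.
by [].
Qed.

Definition Ex : pexpr C :=
  EAdd (EMul (EAdd (EC 1) (EMul (EC (- c ^+ 2)) (EMul EA EB))) EX)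
       (EMul (EMul (EC (c ^+ 3)) (EMul EA (EMul EA EA))) EY).
Definition Ey : pexpr C :=
  EAdd (EMul (EMul (EC (- c ^+ 3)) (EMul EB (EMul EB EB))) EX)
       (EMul (EAdd (EC 1) (EAdd (EMul (EC (c ^+ 2)) (EMul EA EB))
          (EMul (EC (c ^+ 4)) (EMul (EMul EA EB) (EMul EA EB))))) EY).

Lemma phi_x (A B X Y : C) : cx (phi (c%:P) (A, B, X, Y)) = ev Ex A B X Y.
Proof. rewrite /phi /ev /Ex /cx /ca /cb /= hornerC /nW; ring. Qed.

Lemma phi_y (A B X Y : C) : cy (phi (c%:P) (A, B, X, Y)) = ev Ey A B X Y.
Proof.
rewrite /phi /ev /Ey /cy /ca /cb /= hornerC /nW.
rewrite !big_ord_recr big_ord0 /= /cx /=; ring.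
Qed.

Lemma Hx p : cx (psi (mu0 p)) = ev Ex (cb (psi p))^* (ca (psi p))^* (cy (psi p))^* (cx (psi p))^*.
Proof. by rewrite -Hm /mu /mu0 phi_x. Qed.
Lemma Hy p : cy (psi (mu0 p)) = ev Ey (cb (psi p))^* (ca (psi p))^* (cy (psi p))^* (cx (psi p))^*.
Proof. by rewrite -Hm /mu /mu0 phi_y. Qed.

Lemma conjh (P : {poly C}) (n : nat) : (P.[n%:R])^* = (map_poly Num.conj P).[n%:R].
Proof. by rewrite -{2}(conj_nat C n) horner_map. Qed.

Lemma mu0_line (T : C) (z : C) : z^* = z ->
  mu0 (1 + 0 * z, T + 0 * z, 0 + 0 * z, 0 + 1 * z) = (T^* + 0 * z, 1 + 0 * z, 0 + 1 * z, 0 + 0 * z).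
Proof.
move=> zr; rewrite /mu0 /ca /cb /cx /cy /= !mul0r !mul1r !add0r !addr0.
by rewrite rmorph0 rmorph1 zr.
Qed.

Definition Pl (e : pexpr C) (T : C) := lin e 1 T 0 0 0 0 0 1.
Definition cj (P : {poly C}) := map_poly (Num.conj) P.

Lemma coefs_line (T : C) :
  [/\ (cj (Pl eB T))`_0 = lam * T^*, (cj (Pl eA T))`_0 = lam^*,
      (cj (Pl eY T))`_0 = 0, (cj (Pl eX T))`_0 = 0 &
  [/\ (cj (Pl eB T))`_1 = 0, (cj (Pl eA T))`_1 = 0,
      (cj (Pl eY T))`_1 = (deP.[T])^* & (cj (Pl eX T))`_1 = (beP.[T])^*]].
Proof.
rewrite /cj /Pl !coef_map !lin0 !lin1 (even_a hA heq) (even_b hB heq) evA evB evX evY.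
rewrite psi_base' /deP /beP !entPE !hornerE /ca /cb /cx /cy /= !rmorph0 rmorphM /= lam_conj.
by split; split.
Qed.

Lemma E1 : alP2 = (1 - (c ^+ 2 * lam * lam^*)%:P * 'X) * cj deP
                  + (c ^+ 3 * lam ^+ 3)%:P * 'X ^+ 3 * cj beP.
Proof.
apply: poly_eq_all => S; set T := S^*.
have ST : S = T^* by rewrite conjCK.
have PE : lin eX S 1 0 0 0 0 1 0 = peval (fun c => c%:P) (cj (Pl eB T)) (cj (Pl eA T))
            (cj (Pl eY T)) (cj (Pl eX T)) Ex.
  apply: poly_eq_nat => n; rewrite (linfX hX) [RHS]peval_horner /cj -!conjh /Pl.
  rewrite (linfB hB) (linfA hA) (linfY hY) (linfX hX) -/(ev Ex _ _ _ _) -Hx mu0_line ?(conj_nat C) // -ST //.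
have := congr1 (fun P : {poly C} => P`_1) PE.
have [_ ->] := peval_curve (cj (Pl eB T)) (cj (Pl eA T)) (cj (Pl eY T)) (cj (Pl eX T)) Ex.
have [[-> -> -> ->] [-> -> -> ->]] := coefs_line T.
rewrite lin1 /alP2 entPE !hornerE /= => ->.
rewrite /cj ST !horner_map /=; ring.
Qed.

Lemma E2 : gaP2 = - (c ^+ 3 * lam^* ^+ 3)%:P * cj deP
   + (1 + (c ^+ 2 * lam * lam^*)%:P * 'X + (c ^+ 4 * lam ^+ 2 * lam^* ^+ 2)%:P * 'X ^+ 2) * cj beP.
Proof.
apply: poly_eq_all => S; set T := S^*.
have ST : S = T^* by rewrite conjCK.
have PE : lin eY S 1 0 0 0 0 1 0 = peval (fun c => c%:P) (cj (Pl eB T)) (cj (Pl eA T))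
            (cj (Pl eY T)) (cj (Pl eX T)) Ey.
  apply: poly_eq_nat => n; rewrite (linfY hY) [RHS]peval_horner /cj -!conjh /Pl.
  rewrite (linfB hB) (linfA hA) (linfY hY) (linfX hX) -/(ev Ey _ _ _ _) -Hy mu0_line ?(conj_nat C) // -ST //.
have := congr1 (fun P : {poly C} => P`_1) PE.
have [_ ->] := peval_curve (cj (Pl eB T)) (cj (Pl eA T)) (cj (Pl eY T)) (cj (Pl eX T)) Ey.
have [[-> -> -> ->] [-> -> -> ->]] := coefs_line T.
rewrite lin1 /gaP2 entPE !hornerE /= => ->.
rewrite /cj ST !horner_map /=; ring.
Qed.

Lemma cjK (p : {poly C}) : cj (cj p) = p.
Proof. by apply/polyP => i; rewrite /cj !coef_map /= conjCK. Qed.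

Lemma mcC (a : C) : map_poly Num.conj a%:P = (a^*)%:P.
Proof. exact: map_polyC. Qed.
Lemma mcX : map_poly (@Num.conj C) 'X = 'X.
Proof. exact: map_polyX. Qed.

Lemma size_cj (p : {poly C}) : size (cj p) = size p.
Proof. exact: size_map_poly. Qed.

Lemma cj_eq0 (p : {poly C}) : (cj p == 0) = (p == 0).
Proof. by rewrite -!size_poly_eq0 size_cj. Qed.

Lemma size_pcj (p : {poly C}) : p != 0 -> size (p * cj p) = (2 * size p - 1)%N.
Proof.
move=> p0; rewrite size_mul ?cj_eq0 // size_cj.
have : (0 < size p)%N by rewrite size_poly_gt0.
case: (size p) => // k _; rewrite /=; lia.
Qed.

Lemma size_X3 (p : {poly C}) : p != 0 -> size ('X ^+ 3 * p * cj p) = (2 * size p + 2)%N.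
Proof.
move=> p0; rewrite -mulrA mulrC size_mulXn ?mulf_neq0 ?cj_eq0 //.
rewrite size_mul ?cj_eq0 // size_cj.
have : (0 < size p)%N by rewrite size_poly_gt0.
case: (size p) => // k _; rewrite /=; lia.
Qed.

Lemma size_diff (P Q : {poly C}) :
  (P != 0 -> odd (size P)) -> (Q != 0 -> ~~ odd (size Q) /\ (4 <= size Q)%N) ->
  size (P - Q) != 2%N.
Proof.
move=> hP hQ.
have [PQ|QP|E] := ltngtP (size Q) (size P).
- rewrite size_polyDl ?size_polyN //.
  have P0 : P != 0 by rewrite -size_poly_eq0; apply: contraTneq PQ => ->.
  by apply: contraTneq (hP P0) => ->.
- rewrite addrC size_polyDl ?size_polyN //.
  have Q0 : Q != 0 by rewrite -size_poly_eq0; apply: contraTneq QP => ->.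
  have [_ h4] := hQ Q0; apply/eqP => h; move: h4; rewrite h; lia.
- have [P0|P0] := eqVneq P 0.
    have Q0 : Q = 0.
      apply/eqP; have -> : (Q == 0) = (size Q == 0%N) by rewrite size_poly_eq0.
      by rewrite E P0 size_poly0.
    by rewrite P0 Q0 subrr size_poly0.
  have Q0 : Q != 0.
    have -> : (Q != 0) = (size Q != 0%N) by rewrite size_poly_eq0.
    by rewrite E size_poly_eq0.
  have [h _] := hQ Q0; by move: h; rewrite E (hP P0).
Qed.

Lemma core_false : False.
Proof.
have [dE d0] := detP_const; set c0 := detP`_0 in dE d0.
have [_ l0] := Ua_const; rewrite -/lam in l0.
have lb0 : lam^* != 0 by rewrite conjC_eq0.
set r := c ^+ 2 * lam * lam^*.
have r0 : r != 0 by rewrite !mulf_neq0 // expf_neq0.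
have cjal : cj alP2 = (1 - (c ^+ 2 * lam^* * lam)%:P * 'X) * deP
                  + (c ^+ 3 * lam^* ^+ 3)%:P * 'X ^+ 3 * beP.
  rewrite E1 /cj !(rmorphB, rmorphD, rmorphM, rmorph1, map_polyC, map_polyX, rmorphXn) /=.
  rewrite -/(cj (cj deP)) -/(cj (cj beP)) !cjK !mcC mcX creal conjCK.
  rewrite ?polyCM ?polyCX; ring.
have key : (1 - r%:P * 'X) * c0%:P = alP2 * cj alP2 - 'X ^+ 3 * beP * cj beP.
  rewrite -dE /detP alP_eq gaP_eq cjal E2 E1 /r.
  rewrite ?polyCM ?polyCN ?polyCX; ring.
have : size ((1 - r%:P * 'X) * c0%:P) = 2%N.
  rewrite mulrC size_Cmul // addrC size_polyDl ?size_polyN ?size_Cmul ?size_polyX //.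
  by rewrite size_polyC oner_neq0.
rewrite key => /eqP; apply/negP; apply: size_diff.
- move=> a0.
  have a1 : alP2 != 0 by apply: contraNneq a0 => ->; rewrite mul0r.
  rewrite size_pcj //.
  have : (0 < size alP2)%N by rewrite size_poly_gt0.
  case: (size alP2) => // k _.
  have -> : (2 * k.+1 - 1 = (2 * k).+1)%N by lia.
  by rewrite /= oddM.
- move=> b0.
  have b1 : beP != 0 by apply: contraNneq b0 => ->; rewrite mulr0 mul0r.
  rewrite size_X3 //; split.
    have -> : (2 * size beP + 2 = 2 * (size beP).+1)%N by lia.
    by rewrite oddM.
  have : (0 < size beP)%N by rewrite size_poly_gt0.
  lia.
Qed.

End Core.

Section Pos.
Variable C : numClosedFieldType.

Lemma polyfun_opp (f : pt C -> C) : polyfun f -> polyfun (fun p => - f p).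
Proof.
move=> pf; have -> : (fun p => - f p) = (fun p => (fun _ => -1) p * f p).
  by apply: functional_extensionality => p; rewrite mulN1r.
by apply: PF_mul => //; constructor.
Qed.

Lemma polyfun_sub (f g : pt C -> C) : polyfun f -> polyfun g -> polyfun (fun p => f p - g p).
Proof. by move=> pf pg; apply: PF_add => //; apply: polyfun_opp. Qed.

Lemma polyfun_exp (f : pt C -> C) n : polyfun f -> polyfun (fun p => f p ^+ n).
Proof.
move=> pf; elim: n => [|n IH].
  have -> : (fun p => f p ^+ 0) = (fun _ => 1) by apply: functional_extensionality => p; rewrite expr0.
  by constructor.
have -> : (fun p => f p ^+ n.+1) = (fun p => f p * (fun p => f p ^+ n) p).
  by apply: functional_extensionality => p; rewrite exprS.
by apply: PF_mul.
Qed.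

Ltac pf := repeat first
  [ apply: PF_add | apply: polyfun_sub | apply: PF_mul | apply: polyfun_opp
  | apply: polyfun_exp | apply: polyfun_poly | apply: PF_const | apply: PF_a | apply: PF_b
  | apply: PF_x | apply: PF_y ].

Definition TT (p : pt C) := ca p * cb p.

Definition psiA (h k : {poly C}) (p : pt C) : pt C :=
  (ca p, cb p,
   (1 - (ca p * cb p) ^+ 2 * h.[ca p * cb p] * k.[ca p * cb p]) * cx p
     + ca p ^+ 3 * k.[ca p * cb p] * cy p,
   cb p ^+ 3 * k.[ca p * cb p] *
     (1 - ca p * cb p * (h.[ca p * cb p] + ca p * cb p * k.[ca p * cb p]) * h.[ca p * cb p]) * cx p
     + (1 + (ca p * cb p) ^+ 2 * (h.[ca p * cb p] + ca p * cb p * k.[ca p * cb p])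
              * k.[ca p * cb p]) * cy p).

Definition psiA' (h k : {poly C}) (p : pt C) : pt C :=
  (ca p, cb p,
   (1 + (ca p * cb p) ^+ 2 * (h.[ca p * cb p] + ca p * cb p * k.[ca p * cb p])
              * k.[ca p * cb p]) * cx p - ca p ^+ 3 * k.[ca p * cb p] * cy p,
   - (cb p ^+ 3 * k.[ca p * cb p] *
     (1 - ca p * cb p * (h.[ca p * cb p] + ca p * cb p * k.[ca p * cb p]) * h.[ca p * cb p])) * cx p
     + (1 - (ca p * cb p) ^+ 2 * h.[ca p * cb p] * k.[ca p * cb p]) * cy p).

Lemma psiA_reg h k : regular_map (psiA h k).
Proof. by split; rewrite /psiA /ca /cb /cx /cy /=; pf. Qed.

Lemma psiA'_reg h k : regular_map (psiA' h k).
Proof. by split; rewrite /psiA' /ca /cb /cx /cy /=; pf. Qed.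

Lemma psiA_can h k : cancel (psiA h k) (psiA' h k).
Proof.
move=> [[[a b] x] y]; rewrite /psiA /psiA' /ca /cb /cx /cy /=.
set s := h.[a * b]; set kk := k.[a * b].
apply: (f_equal2 pair); [apply: (f_equal2 pair); [by [] | ring] | ring].
Qed.

Lemma psiA'_can h k : cancel (psiA' h k) (psiA h k).
Proof.
move=> [[[a b] x] y]; rewrite /psiA /psiA' /ca /cb /cx /cy /=.
set s := h.[a * b]; set kk := k.[a * b].
apply: (f_equal2 pair); [apply: (f_equal2 pair); [by [] | ring] | ring].
Qed.

Lemma psiA_equiv h k : equivariant (psiA h k).
Proof.
move=> t t0 [[[a b] x] y]; rewrite /psiA /act /ca /cb /cx /cy /=.
have HT : t ^+ 2 * a * (t ^- 2 * b) = a * b.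
  by rewrite mulrACA mulfV ?mul1r // expf_neq0.
rewrite HT; set s := h.[a * b]; set kk := k.[a * b].
have e6 : t ^+ 6 * t ^- 3 = t ^+ 3.
  by rewrite -[6%N]/(3 + 3)%N exprD -mulrA mulfV ?mulr1 // expf_neq0.
have e6' : t ^- 6 * t ^+ 3 = t ^- 3.
  by rewrite -[6%N]/(3 + 3)%N exprD invfM -mulrA mulVf ?mulr1 // expf_neq0.
apply: (f_equal2 pair); [apply: (f_equal2 pair); [by [] | ] | ].
- have -> : (t ^+ 2 * a) ^+ 3 = t ^+ 6 * a ^+ 3 by rewrite exprMn -exprM.
  field; exact: t0.
- have -> : (t ^- 2 * b) ^+ 3 = t ^- 6 * b ^+ 3 by rewrite exprMn exprVn -exprM.
  field; exact: t0.
Qed.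

Lemma conj_real_horner (h : {poly C}) z : real_poly h -> (h.[z])^* = h.[z^*].
Proof.
move=> hr; rewrite -horner_map; congr (_.[_]); apply/polyP => i.
rewrite coef_map /=; apply: conj_Creal; exact: (polyOverP hr).
Qed.

Lemma psiA_conj h k (hr : real_poly h) (kr : real_poly k) p :
  mu (h + 'X * k) (psiA h k p) = psiA h k (mu h p).
Proof.
case: p => [[[a b] x] y]; rewrite /mu /mu0 /phi /psiA /ca /cb /cx /cy /= /nW.
rewrite !big_ord_recr big_ord0 /=.
rewrite !hornerE.
rewrite !(rmorphD, rmorphB, rmorphM, rmorphN, rmorphXn, rmorph1) /=.
rewrite !conj_real_horner // !rmorphM /= (mulrC a^* b^*).
set s := h.[b^* * a^*]; set kk := k.[b^* * a^*].
apply: (f_equal2 pair); [apply: (f_equal2 pair); [by [] | ] | ]; rewrite ?big_ord0 ?add0r; ring.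
Qed.

End Pos.

Section Fin.
Variable C : numClosedFieldType.

Lemma eqf_sym (m1 m2 : pt C -> pt C) : equiv_forms m1 m2 -> equiv_forms m2 m1.
Proof.
move=> [psi [psi' [[r1 r2] c1 c2 he H]]]; exists psi', psi; split => //.
- by move=> t t0 p; rewrite -{1}(c2 p) -he // c1.
- by move=> p; rewrite H !c1.
Qed.

Lemma regular_comp (f g : pt C -> pt C) : regular_map f -> regular_map g ->
  regular_map (fun p => f (g p)).
Proof.
move=> [fa fb fx fy] rg; split.
- exact: (polyfun_comp fa rg). - exact: (polyfun_comp fb rg).
- exact: (polyfun_comp fx rg). - exact: (polyfun_comp fy rg).
Qed.

Lemma eqf_trans (m1 m2 m3 : pt C -> pt C) :
  equiv_forms m1 m2 -> equiv_forms m2 m3 -> equiv_forms m1 m3.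
Proof.
move=> [p1 [q1 [[r1 s1] a1 b1 e1 H1]]] [p2 [q2 [[r2 s2] a2 b2 e2 H2]]].
exists (fun p => p2 (p1 p)), (fun p => q1 (q2 p)); split.
- by split; apply: regular_comp.
- by move=> p; rewrite a2 a1.
- by move=> p; rewrite b1 b2.
- by move=> t t0 p; rewrite e1 // e2.
- by move=> p; rewrite H2 H1.
Qed.

Lemma eqf_ext (m1 m2 m1' m2' : pt C -> pt C) : equiv_forms m1 m2 ->
  (forall p, m1 p = m1' p) -> (forall p, m2 p = m2' p) -> equiv_forms m1' m2'.
Proof.
move=> [psi [psi' [R c1 c2 he H]]] E1 E2; exists psi, psi'; split => // p.
by rewrite -E2 H E1.
Qed.

Lemma mu_zero (p : pt C) : mu 0 p = mu0 p.
Proof.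
case: p => [[[a b] x] y]; rewrite /mu /mu0 /phi /ca /cb /cx /cy /= /nW horner0.
rewrite !big_ord_recr big_ord0 /=.
apply: (f_equal2 pair); [apply: (f_equal2 pair); [by [] | ] | ]; ring.
Qed.

Lemma equivA (h k : {poly C}) : real_poly h -> real_poly k -> equiv_forms (mu h) (mu (h + 'X * k)).
Proof.
move=> hr kr; exists (psiA h k), (psiA' h k); split.
- by split; [apply: psiA_reg | apply: psiA'_reg].
- exact: psiA_can. - exact: psiA'_can. - exact: psiA_equiv.
- by move=> p; rewrite -psiA_conj // psiA'_can.
Qed.

Lemma decomp (h : {poly C}) : real_poly h ->
  exists k, real_poly k /\ h = (h`_0)%:P + 'X * k.
Proof.
move=> hr; exists (drop_poly 1 h); split.
  by apply/polyOverP => i; rewrite coef_drop_poly; exact: (polyOverP hr).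
rewrite -{1}(poly_take_drop 1 h) mulrC expr1; congr (_ + _).
apply/polyP => i; rewrite coef_take_poly coefC; by case: i.
Qed.

Lemma realh0 (h : {poly C}) : real_poly h -> h.[0] \is Num.real.
Proof. by move=> hr; rewrite horner_coef0; exact: (polyOverP hr). Qed.

Lemma equiv_const (h : {poly C}) : real_poly h -> equiv_forms (mu h) (mu (h.[0])%:P).
Proof.
move=> hr; have [k [kr E]] := decomp hr.
apply: eqf_sym; rewrite horner_coef0.
have h0r : real_poly (h`_0)%:P by rewrite /real_poly polyOverC; exact: (polyOverP hr).
have := equivA h0r kr; rewrite -E; exact.
Qed.

Definition psiS (rho : C) (p : pt C) : pt C := (rho * ca p, rho * cb p, cx p, cy p).

Lemma equivS (c rho : C) : rho^* = rho -> rho != 0 ->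
  equiv_forms (mu c%:P) (mu (c / rho)%:P).
Proof.
move=> rr r0; exists (psiS rho), (psiS rho^-1); split.
- split; split; rewrite /psiS /ca /cb /cx /cy /=;
    repeat first [apply: PF_mul | apply: PF_const | apply: PF_a | apply: PF_b | apply: PF_x | apply: PF_y].
- by move=> [[[a b] x] y]; rewrite /psiS /ca /cb /cx /cy /= !mulrA mulVf ?mul1r.
- by move=> [[[a b] x] y]; rewrite /psiS /ca /cb /cx /cy /= !mulrA mulfV ?mul1r.
- move=> t t0 [[[a b] x] y]; rewrite /psiS /act /ca /cb /cx /cy /=.
  by rewrite (mulrCA rho (t ^+ 2)) (mulrCA rho (t ^- 2)).
- move=> [[[a b] x] y]; rewrite /psiS /mu /mu0 /phi /ca /cb /cx /cy /= /nW !hornerC.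
  rewrite !big_ord_recr big_ord0 /= !rmorphM /= ?fmorphV /= ?rr ?big_ord0 ?add0r.
  apply: (f_equal2 pair); [apply: (f_equal2 pair); [apply: (f_equal2 pair) | ] | ];
    field; exact: r0.
Qed.

End Fin.

Unset Implicit Arguments.

Lemma not_equiv0 (C : numClosedFieldType) (c : C) : c^* = c -> c != 0 ->
  ~ equiv_forms (@mu0 C) (mu c%:P).
Proof.
move=> cr c0 [psi [psi' [[[pa pb px py] [qa qb qx qy]] c1 c2 he H]]].
have [eA hA] := polyfun_expr pa; have [eB hB] := polyfun_expr pb.
have [eX hX] := polyfun_expr px; have [eY hY] := polyfun_expr py.
have [fA gA] := polyfun_expr qa; have [fB gB] := polyfun_expr qb.
have [fX gX] := polyfun_expr qx; have [fY gY] := polyfun_expr qy.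
exact: (core_false hA hB hX hY gA gB gX gY c1 c2 he cr c0 H).
Qed.

Theorem mainTheorem2 (C : numClosedFieldType) :
  [/\ forall h : {poly C}, real_poly h ->
        (equiv_forms (@mu0 C) (mu h) <-> h.[0] = 0),
      ~ equiv_forms (@mu0 C) (mu 1) &
      forall h g : {poly C}, real_poly h -> real_poly g ->
        h.[0] != 0 -> g.[0] != 0 -> equiv_forms (mu h) (mu g)].
Proof.
split.
- move=> h hr; split.
  + move=> Heq; apply/eqP; apply: contraT => h0.
    have cr : (h.[0])^* = h.[0] by apply: conj_Creal; exact: realh0.
    exfalso; exact: (@not_equiv0 C _ cr h0 (eqf_trans Heq (equiv_const hr))).
  + move=> h0; have [k [kr E]] := decomp hr.
    have z0 : real_poly (0 : {poly C}) by rewrite /real_poly -polyC0 polyOverC real0.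
    apply: (eqf_ext (equivA z0 kr)) => p; first exact: mu_zero.
    by rewrite E -horner_coef0 h0 polyC0.
- by apply: (@not_equiv0 C 1); rewrite ?conjC1 ?oner_neq0.
- move=> h g hr gr h0 g0.
  set rho := h.[0] / g.[0].
  have rr : rho^* = rho.
    by rewrite /rho fmorph_div /= (conj_Creal (realh0 hr)) (conj_Creal (realh0 gr)).
  have r0 : rho != 0 by rewrite /rho mulf_neq0 ?invr_eq0.
  apply: (eqf_trans (equiv_const hr)).
  apply: (eqf_trans (equivS (h.[0]) rr r0)).
  have -> : h.[0] / rho = g.[0] by rewrite /rho invfM invrK mulrA mulfV ?mul1r.
  exact: (eqf_sym (equiv_const gr)).
Qed.
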